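(* Let $Q,R,F\subseteq\mathcal{P}$, and define $\mu=\gcd\!\left(\dfrac{\xi_{\mathcal{P}}}{TM(\xi_F)},\ TM(\xi_Q),\ TM(\xi_R)\right)$ and $\nu=\dfrac{\xi_Q}{TM(\xi_Q)}\cdot\dfrac{\xi_R}{TM(\xi_R)}\cdot\dfrac{\xi_{F^c}}{TM(\xi_{F^c})}$. Then $\xi_{(Q\cap R)\setminus F}=\xi_{(Q\cap R)\cap F^c}=\mu\cdot\nu$.
   Context: $\mathcal{P}=\{P_1,\ldots,P_n\}$, $F^c=\mathcal{P}\setminus F$; $\varphi:2^{\mathcal{P}}\to\mathbb{F}_2^n$ sends a set to its indicator vector; for $S\subseteq\mathcal{P}$, $\xi_S(Y_1,\ldots,Y_n)=\prod_{i=1}^n(1+Y_i+\varphi(S)_i)$, i.e. $\xi_S=\prod_{i:P_i\in S}Y_i\cdot\prod_{i:P_i\notin S}(1+Y_i)$; in particular $\xi_{\mathcal{P}}=Y_1\cdots Y_n$. $TM(f)$ is the smallest monomial of $f$ in the lexicographic order with $Y_n\prec\cdots\prec Y_1$. The quotient $\xi_S/TM(\xi_S)$ is the polynomial $\prod_{i:P_i\notin S}(1+Y_i)$, and $\xi_{\mathcal{P}}/TM(\xi_F)=\prod_{i:P_i\notin F}Y_i$; the gcd is that of monomials; products and the equality are in the Boolean polynomial ring $\mathbb{F}_2[\bar Y]/\langle Y_i^2-Y_i\rangle$. *)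

(* Defs.v *)
(* Boolean polynomial ring F_2[Y_1..Y_n]/<Y_i^2 - Y_i>,
   represented by its canonical multilinear normal forms: a Boolean
   polynomial is the set of its square-free monomials (coefficients in F_2),
   a square-free monomial is the set of variables occurring in it.
   The variable Y_(i+1) is indexed by i : 'I_n; parties P_(i+1) likewise. *)
From mathcomp Require Import all_boot.
Set Implicit Arguments. Unset Strict Implicit. Unset Printing Implicit Defensive.

Section BoolPoly.
Variable n : nat.

Definition bmono := {set 'I_n}.
Definition bpoly := {set bmono}.

Definition bzero : bpoly := set0.
Definition bone : bpoly := [set set0].
Definition bvar (i : 'I_n) : bpoly := [set [set i]].
Definition bmonop (m : bmono) : bpoly := [set m].

Definition badd (p q : bpoly) : bpoly := (p :\: q) :|: (q :\: p).

(* multiplication: Y_i^2 = Y_i, so the product of monomials a, b is a :|: b;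
   the coefficient of m is the parity of the number of such pairs *)
Definition bmul (p q : bpoly) : bpoly :=
  [set m : bmono | odd #|[set ab : bmono * bmono |
      [&& ab.1 \in p, ab.2 \in q & ab.1 :|: ab.2 == m]]|].

Definition bconst (b : bool) : bpoly := if b then bone else bzero.

Definition xi (S : {set 'I_n}) : bpoly :=
  foldr bmul bone
    [seq badd (badd bone (bvar i)) (bconst (i \in S)) | i <- enum 'I_n].

(* lexicographic order with Y_n < ... < Y_1 on square-free monomials:
   m1 < m2 iff at the first variable (smallest index) where they differ,
   the variable occurs in m2 *)
Definition lex_lt (m1 m2 : bmono) : bool :=
  [exists i : 'I_n, [&& i \in m2, i \notin m1 &
     [forall j : 'I_n, (j < i)%N ==> ((j \in m1) == (j \in m2))]]].
Definition lex_le (m1 m2 : bmono) : bool := (m1 == m2) || lex_lt m1 m2.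

(* smallest monomial of f (default set0 for f = 0, where it is undefined) *)
Definition TM (f : bpoly) : bmono :=
  odflt set0 [pick m in f | [forall m' in f, lex_le m m']].

(* exact division of a polynomial by a monomial dividing each of its terms *)
Definition bdivm (f : bpoly) (m : bmono) : bpoly := [set t :\: m | t in f].

(* gcd of (polynomials that are) monomials *)
Definition bgcd (p q : bpoly) : bpoly := [set a :&: b | a in p, b in q].

End BoolPoly.

(* Main.v *)
Require Import Defs.
From mathcomp Require Import all_boot.
Set Implicit Arguments. Unset Strict Implicit. Unset Printing Implicit Defensive.

Lemma odd_invol (T : finType) (X : {set T}) (f : T -> T) :
  {in X, forall x, f x \in X} -> {in X, forall x, f (f x) = x} ->
  odd #|X| = odd #|[set x in X | f x == x]|.
Proof.
have [k lek] := ubnP #|X|; elim: k X lek => // k IH X lek fX ff.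
case: (boolP [exists x in X, f x != x]).
- case/exists_inP => x xX fxx.
  set Y := X :\ x :\ f x.
  have fxX : f x \in X :\ x by rewrite !inE fxx fX.
  have cX : #|X| = (#|Y|).+2.
    by rewrite (cardsD1 x X) xX (cardsD1 (f x) (X :\ x)) fxX.
  have eqF : [set y in Y | f y == y] = [set y in X | f y == y].
    apply/setP => y; rewrite !inE.
    case: (eqVneq (f y) y) => fy; rewrite ?andbF ?andbT //.
    case: (boolP (y \in X)) => yX; rewrite ?andbF ?andbT //.
    apply/andP; split.
    + apply/eqP => e; rewrite e ff // in fy.
      by move/eqP: fxx; rewrite -fy.
    + by apply/eqP => e; rewrite e in fy; move/eqP: fxx.
  rewrite cX /= negbK -eqF; apply: IH.
  - by move: lek; rewrite cX ltnS => /ltnW.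
  - move=> y; rewrite !inE => /and3P[y1 y2 yX].
    rewrite fX // andbT; apply/andP; split.
    + by apply: contra y2 => /eqP e; rewrite -(ff y yX) e ff.
    + by apply: contra y1 => /eqP e; rewrite -(ff y yX) e.
  - by move=> y; rewrite !inE => /and3P[_ _ yX]; apply: ff.
- rewrite negb_exists_in => /forall_inP H; rewrite (_ : [set x in X | f x == x] = X) //.
  apply/setP => x; rewrite inE; case: (boolP (x \in X)) => // /H.
  by rewrite negbK.
Qed.

Ltac pt x := repeat match goal with H : _ |- _ => move: (H x); clear H end.
Ltac bcase := repeat match goal with |- context [?y \in ?s] => case: (y \in s) end.
Ltac revb := repeat match goal with H : is_true _ |- _ => move: H | H : _ = _ |- _ => move: H end.
Ltac finb := bcase; simpl; intros; repeat match goal with H : is_true true -> _ |- _ => specialize (H isT) end; simpl in *; by [].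
Ltac fin x := pt x; rewrite ?inE; finb.

Section S.
Variable n : nat.
Implicit Types (p q : bpoly n) (a b m I A B : {set 'I_n}).

Lemma mul_disj p q I :
  (forall a, a \in p -> a \subset I) -> (forall b, b \in q -> [disjoint b & I]) ->
  forall m, (m \in bmul p q) = (m :&: I \in p) && (m :\: I \in q).
Proof.
move=> hp hq m; rewrite inE.
set S := [set ab : bmono n * bmono n | _].
have -> : S = if (m :&: I \in p) && (m :\: I \in q) then [set (m :&: I, m :\: I)] else set0.
  apply/setP => [[a b]]; rewrite !inE /=.
  apply/idP/idP.
  - case/and3P => ap bq /eqP e.
    have e1 : m :&: I = a.
      by rewrite -e setIUl (setIidPl (hp a ap)) (disjoint_setI0 (hq b bq)) setU0.
    have e2 : m :\: I = b.
      have : a :\: I = set0 by apply/eqP; rewrite setD_eq0 hp.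
      by rewrite -e setDUl => ->; rewrite (setDidPl (hq b bq)) set0U.
    by rewrite e1 e2 ap bq !inE !eqxx.
  - case: ifP => [/andP[h1 h2]|]; rewrite ?inE // => /eqP [-> ->].
    by rewrite h1 h2 setID eqxx.
by case: ifP => _; [rewrite cards1 | rewrite cards0].
Qed.

Definition D A : bpoly n := [set m : bmono n | m \subset A].
Definition swapf (K : {set 'I_n}) (ab : bmono n * bmono n) : bmono n * bmono n :=
  ((ab.1 :\: K) :|: (ab.2 :&: K), (ab.2 :\: K) :|: (ab.1 :&: K)).


Lemma mulD A B : bmul (D A) (D B) = D (A :|: B).
Proof.
apply/setP => m; rewrite !inE.
set S := [set ab : bmono n * bmono n | _].
case: (boolP (m \subset A :|: B)) => mAB; last first.
  apply/negbTE; rewrite (_ : S = set0) ?cards0 //.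
  apply/setP => [[a b]]; rewrite !inE /=; apply/negP => /and3P[ha hb /eqP e].
  by apply: (negP mAB); rewrite -e; apply: setUSS.
move/subsetP: mAB => mAB.
rewrite (@odd_invol _ S (swapf (m :&: A :&: B))).
- rewrite (_ : [set x in S | _] = [set (m :&: A, m :&: B)]) ?cards1 //.
  apply/setP => [[a b]]; rewrite !inE /= /swapf /= xpair_eqE.
  apply/idP/idP.
  + case/andP => /and3P[/subsetP ha /subsetP hb /eqP e]; rewrite xpair_eqE.
    case/andP => /eqP/setP e1 /eqP/setP e2; subst m.
    by apply/andP; split; apply/eqP/setP => x; fin x.
  + move/eqP => [-> ->].
    repeat (apply/andP; split);
     try apply/subsetP => x; try (apply/eqP/setP => x); fin x.
- move=> [a b]; rewrite !inE /swapf /= => /and3P[/subsetP ha /subsetP hb /eqP e]; subst m.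
  by repeat (apply/andP; split); try apply/subsetP => x; try (apply/eqP/setP => x); fin x.
- move=> [a b] _; rewrite /swapf /=; congr pair; apply/setP => x; fin x.
Qed.

Lemma set1_n0 (i : 'I_n) : ([set i] == set0) = false.
Proof. by apply/negbTE/set0Pn; exists i; rewrite inE. Qed.

Lemma gin (S : {set 'I_n}) i a :
  (a \in badd (badd (bone n) (bvar i)) (bconst n (i \in S))) =
  if i \in S then a == [set i] else (a == set0) || (a == [set i]).
Proof.
rewrite /badd /bconst /bone /bvar; case: (i \in S); rewrite !inE;
  case: (eqVneq a set0) => [->|_]; rewrite ?eqxx ?(eq_sym set0) ?set1_n0 //=;
  by case: (a == [set i]).
Qed.

Lemma mI1 m (i : 'I_n) : m :&: [set i] = if i \in m then [set i] else set0.
Proof.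
apply/setP => x; rewrite !inE; case: (eqVneq x i) => [->|xi]; rewrite ?andbT ?andbF //.
by case: (i \in m); rewrite !inE ?eqxx.
by case: (i \in m); rewrite !inE ?(negbTE xi).
Qed.


Lemma xi_gen (S : {set 'I_n}) (s : seq 'I_n) : uniq s ->
  foldr (@bmul n) (bone n) [seq badd (badd (bone n) (bvar i)) (bconst n (i \in S)) | i <- s] =
  [set m : bmono n | (m \subset [set x in s]) && (S :&: [set x in s] \subset m)].
Proof.
elim: s => [|i s IH] /= us.
  have -> : [set x in [::]] = set0 :> {set 'I_n} by apply/setP => x; rewrite !inE.
  by apply/setP => m; rewrite !inE setI0 sub0set subset0 andbT.
case/andP: us => nis us; rewrite IH //.
apply/setP => m; rewrite (@mul_disj _ _ [set i]).
- rewrite gin mI1 !inE.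
  case iS: (i \in S); case im: (i \in m); rewrite ?eqxx ?set1_n0 ?(eq_sym set0) ?set1_n0 /=;
  try (apply/esym/negbTE/negP => /andP[/subsetP h1 /subsetP h2];
       first [ have := h2 i | have := h1 i ]; rewrite !inE ?eqxx ?iS ?im ?nis /=; by auto);
  apply/idP/idP => /andP[/subsetP h1 /subsetP h2]; apply/andP; split; apply/subsetP => x;
  pt x; revb; rewrite ?inE; case: (eqVneq x i) => [->|xi]; rewrite ?eqxx ?(negbTE xi); finb.
- move=> a; rewrite gin; case: (i \in S) => [/eqP ->|/orP[] /eqP ->] //; exact: sub0set.
- move=> b; rewrite inE => /andP[/subsetP h _]; rewrite disjoint_sym disjoints1.
  by apply: contra nis => /h; rewrite inE.
Qed.

Definition U (S : {set 'I_n}) : bpoly n := [set m : bmono n | S \subset m].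

Lemma xiU S : xi S = U S.
Proof.
rewrite /xi xi_gen ?enum_uniq //.
have -> : [set x in enum 'I_n] = setT by apply/setP => x; rewrite !inE mem_enum.
by apply/setP => m; rewrite !inE subsetT setIT.
Qed.

Lemma TMU S : TM (U S) = S.
Proof.
rewrite /TM; case: pickP => [m /andP[] | H] /=.
  rewrite inE => Sm /forall_inP /(_ S); rewrite inE subxx => /(_ isT).
  rewrite /lex_le => /orP[/eqP //|/existsP[i /and3P[iS im _]]].
  by move: im; rewrite (subsetP Sm).
move: (H S); rewrite inE subxx /= => /negbT/negP; case.
apply/forall_inP => m'; rewrite inE => Sm'; rewrite /lex_le.
case: (eqVneq S m') => //= ne.
have : m' :\: S != set0.
  by rewrite setD_eq0; apply: contra ne => m'S; rewrite eqEsubset Sm' m'S.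
case/set0Pn => i0 Hi0.
case: (arg_minnP (fun i : 'I_n => nat_of_ord i) Hi0) => i /setDP[im iS] Hmin.
apply/existsP; exists i; rewrite im iS /=; apply/forallP => j; apply/implyP => ji.
case jS: (j \in S); first by rewrite (subsetP Sm').
case jm: (j \in m') => //.
have jD : j \in m' :\: S by rewrite !inE jS jm.
by move: (Hmin j jD); rewrite leqNgt ji.
Qed.

Lemma bdivmU S : bdivm (U S) S = D (~: S).
Proof.
apply/setP => m; rewrite /bdivm !inE; apply/imsetP/idP.
  case=> t; rewrite inE => St ->; apply/subsetP => x; rewrite !inE; by case/andP.
move=> mS; exists (m :|: S); first by rewrite inE subsetUr.
apply/setP => x; rewrite !inE; move/subsetP: mS => /(_ x); rewrite inE.
by case: (x \in m); case: (x \in S) => // /(_ isT).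
Qed.

Lemma UT : U setT = [set setT].
Proof. by apply/setP => m; rewrite !inE subTset. Qed.

Lemma bgcd11 a b : bgcd [set a] [set b] = [set a :&: b].
Proof. by rewrite /bgcd imset2_set1l imset_set1. Qed.
End S.

Theorem mainTheorem17 (n : nat) (Q R F : {set 'I_n}) :
  let mu := bgcd (bgcd (bdivm (xi [set: 'I_n]) (TM (xi F)))
                       (bmonop (TM (xi Q))))
                 (bmonop (TM (xi R))) in
  let nu := bmul (bmul (bdivm (xi Q) (TM (xi Q)))
                       (bdivm (xi R) (TM (xi R))))
                 (bdivm (xi (~: F)) (TM (xi (~: F)))) in
  xi ((Q :&: R) :\: F) = xi ((Q :&: R) :&: ~: F) /\
  xi ((Q :&: R) :&: ~: F) = bmul mu nu.
Proof.
move=> mu nu; split; first by rewrite setDE.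
rewrite /mu /nu !xiU !TMU !bdivmU !mulD UT /bdivm imset_set1 /bmonop !bgcd11 setTD.
apply/setP => m; rewrite (@mul_disj _ _ _ (~: F :&: Q :&: R)).
- rewrite !inE; apply/idP/idP.
  + move/subsetP => h; apply/andP; split; [apply/eqP/setP => x | apply/subsetP => x]; fin x.
  + case/andP => /eqP/setP e /subsetP h; apply/subsetP => x; fin x.
- by move=> a /set1P ->.
- move=> b; rewrite inE => /subsetP h; rewrite -setI_eq0; apply/eqP/setP => x; fin x.
Qed.
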